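(* Let $r>0$ and $d>0$ with $d\sqrt{2}<r$, and let $X\subseteq\mathbb{R}^2$ be a bounded $r$-regular set whose boundary $\partial X$ contains no point of the grid $d\mathbb{Z}^2$. Let $I$ be the digital image of $X$ by the lattice $d\mathbb{Z}^2$. Then one may construct from $I$ (i.e. as a function of the image $I$ alone) a set $\Gamma\subseteq\mathbb{R}^2$ such that $d_H(\partial\Gamma,\partial X)<d$.
   Context: A closed set $X\subseteq\mathbb{R}^2$ is $r$-regular if for each $x\in\partial X$ there are two open balls of radius $r$, $B_r(x_b)\subseteq X$ and $B_r(x_w)\subseteq \mathbb{R}^2\setminus X$, with $\overline{B_r(x_b)}\cap\overline{B_r(x_w)}=\{x\}$. The pixels of the lattice $d\mathbb{Z}^2$ are the closed squares $[dk,d(k+1)]\times[dl,d(l+1)]$, $k,l\in\mathbb{Z}$. The digital image of $X$ assigns to each pixel $C$ the intensity $\lambda=\phi(\mathrm{area}(X\cap C)/d^2)$, where $\phi:[0,1]\to[0,1]$ is a fixed monotonic function with $\phi(0)=0$, $\phi(1)=1$, $\phi((0,1))\subseteq(0,1)$. The Hausdorff distance is $d_H(Y,Z)=\max\{\sup_{y\in Y}\inf_{z\in Z}\|y-z\|,\ \sup_{z\in Z}\inf_{y\in Y}\|y-z\|\}$. *)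

(* Defs.v *)
From HB Require Import structures.
From mathcomp Require Import all_boot all_order all_algebra.
From mathcomp Require Import all_classical all_reals all_analysis.
Set Implicit Arguments. Unset Strict Implicit. Unset Printing Implicit Defensive.
Import Order.TTheory GRing.Theory Num.Theory numFieldNormedType.Exports.
Local Open Scope classical_set_scope.
Local Open Scope ring_scope.

Section Digital.
Variable R : realType.

Definition pt := (R * R)%type.

Definition edist (p q : pt) : R :=
  Num.sqrt ((p.1 - q.1) ^+ 2 + (p.2 - q.2) ^+ 2).

Definition oball (c : pt) (r : R) : set pt := [set p | edist c p < r].
Definition cball (c : pt) (r : R) : set pt := [set p | edist c p <= r].

(* topological boundary: closure minus interior (product topology on R*R,
   which is the Euclidean topology) *)
Definition bdry (X : set pt) : set pt := closure X `\` interior X.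

Definition bounded_plane (X : set pt) : Prop :=
  exists M : R, forall x, X x -> edist (0, 0) x <= M.

Definition r_regular (r : R) (X : set pt) : Prop :=
  closed X /\
  forall x, bdry X x ->
    exists xb xw : pt,
      oball xb r `<=` X /\ oball xw r `<=` ~` X /\
      cball xb r `&` cball xw r = [set x].

Definition grid_pt (d : R) (k l : int) : pt := (d * k%:~R, d * l%:~R).

Definition pixel (d : R) (k l : int) : set pt :=
  [set p | d * k%:~R <= p.1 <= d * (k + 1)%:~R /\
           d * l%:~R <= p.2 <= d * (l + 1)%:~R].

Definition area (A : set pt) : \bar R :=
  ((@lebesgue_measure R) \x (@lebesgue_measure R))%E A.

Definition admissible_phi (phi : R -> R) : Prop :=
  (forall x y, 0 <= x -> x <= y -> y <= 1 -> phi x <= phi y) /\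
  phi 0 = 0 /\ phi 1 = 1 /\
  (forall x, 0 < x < 1 -> 0 < phi x < 1).

Definition dimage := int -> int -> R.

Definition digital_image (phi : R -> R) (d : R) (X : set pt) : dimage :=
  fun k l => phi (fine (area (X `&` pixel d k l)) / d ^+ 2).

Definition hausdorff (Y Z : set pt) : \bar R :=
  Order.max
    (ereal_sup [set ereal_inf [set (edist y z)%:E | z in Z] | y in Y])
    (ereal_sup [set ereal_inf [set (edist y z)%:E | y in Y] | z in Z]).

End Digital.
Arguments pt R : clear implicits.
Arguments dimage R : clear implicits.

(* Main.v *)
Require Import Defs.
From HB Require Import structures.
From mathcomp Require Import all_boot all_order all_algebra.
From mathcomp Require Import all_classical all_reals all_analysis.
Import Order.TTheory GRing.Theory Num.Theory numFieldNormedType.Exports.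
Local Open Scope classical_set_scope.
Local Open Scope ring_scope.
From mathcomp Require Import measurable_realfun.
From mathcomp Require Import ring lra zify.
Set Implicit Arguments. Unset Strict Implicit. Unset Printing Implicit Defensive.

Section SM.
Variable R : realType.
Implicit Types (p q : pt R) (A B : set (pt R)).

Lemma nbhs_box p A : nbhs p A -> exists2 e : R, 0 < e &
  forall q, `|p.1 - q.1| < e -> `|p.2 - q.2| < e -> A q.
Proof.
move=> /nbhs_ballP [e e0 H]; exists e => // q h1 h2; apply: H.
by split => /=; rewrite /ball /=.
Qed.

Lemma box_nbhs p A (e : R) : 0 < e ->
  (forall q, `|p.1 - q.1| < e -> `|p.2 - q.2| < e -> A q) -> nbhs p A.
Proof.
move=> e0 H; apply/nbhs_ballP; exists e => // q [h1 h2]; exact: H.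
Qed.

Lemma closure_box p A : closure A p -> forall e : R, 0 < e ->
  exists q, A q /\ `|p.1 - q.1| < e /\ `|p.2 - q.2| < e.
Proof.
move=> cl e e0.
have := cl (fun q => `|p.1 - q.1| < e /\ `|p.2 - q.2| < e).
case=> [|q [Aq [h1 h2]]]; last by exists q.
exact: (box_nbhs e0).
Qed.

Lemma area_mono A B : (forall x, measurable (xsection A x)) ->
  (forall x, measurable (xsection B x)) -> A `<=` B -> (area A <= area B)%E.
Proof.
move=> mA mB AB; rewrite /area /product_measure1 !ge0_integralTE //.
apply: ereal_sup_le => _ [h hle <-]; exists h => //= x.
apply: le_trans (hle x) _; apply: le_measure; rewrite ?inE //.
- exact: mA.
- exact: mB.
- by move=> y /xsectionP /AB /xsectionP.
Qed.

Lemma leb_itv (a b : R) : a < b -> lebesgue_measure (`[a, b]%classic : set R) = (b - a)%:E.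
Proof. by move=> h; rewrite lebesgue_measure_itv /= lte_fin h. Qed.

Lemma area_rect (a1 b1 a2 b2 : R) : a1 < b1 -> a2 < b2 ->
  area (`[a1, b1]%classic `*` `[a2, b2]%classic) = ((b1 - a1) * (b2 - a2))%:E.
Proof.
move=> h1 h2; rewrite /area product_measure1E //.
have e1 := leb_itv h1; have e2 := leb_itv h2.
transitivity ((b1 - a1)%:E * (b2 - a2)%:E)%E; last by [].
by congr (_ * _)%E.
Qed.
Lemma closed_xsection (X : set (pt R)) x : closed X -> closed (xsection X x).
Proof.
move=> cX; rewrite xsectionE; apply: preimage_closed => // y _.
move=> A /= /nbhs_ballP [e e0 H]; apply/nbhs_ballP; exists e => // z yz.
apply: H; split => //=; rewrite /ball /= subrr normr0 //.
Qed.

Lemma meas_xsection_closed (X : set (pt R)) x : closed X -> measurable (xsection X x).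
Proof. by move=> cX; apply: closed_measurable; apply: closed_xsection. Qed.

Lemma pixelE (d : R) k l : pixel d k l =
  `[d * k%:~R, d * (k + 1)%:~R]%classic `*` `[d * l%:~R, d * (l + 1)%:~R]%classic.
Proof.
by apply/funext => p; apply/propext; rewrite /pixel /setX /= !in_itv.
Qed.

Definition sq (c : pt R) (e : R) : set (pt R) :=
  `[c.1 - e, c.1 + e]%classic `*` `[c.2 - e, c.2 + e]%classic.

Lemma meas_sq c e : measurable (sq c e).
Proof. by apply: measurableX. Qed.

Lemma area_sq c e : 0 < e -> area (sq c e) = (4 * e ^+ 2)%:E.
Proof.
move=> e0; rewrite /sq area_rect; first by congr (_%:E); ring.
all: lra.
Qed.

Variables (d : R) (d0 : 0 < d) (phi : R -> R) (hphi : admissible_phi phi).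

Lemma area_pixel k l : area (pixel d k l) = (d ^+ 2)%:E.
Proof.
rewrite pixelE area_rect; first by congr (_%:E); rewrite !intrD; ring.
all: by rewrite intrD mulrDr mulr1 ltrDl.
Qed.

Lemma meas_pixel k l : measurable (pixel d k l).
Proof. by rewrite pixelE; apply: measurableX. Qed.

Lemma img_pos X k l : 0 < digital_image phi d X k l -> exists u, X u /\ pixel d k l u.
Proof.
rewrite /digital_image => h; apply: contrapT => hn.
have e : X `&` pixel d k l = set0.
  by apply/seteqP; split => // p [Xp Pp]; apply: hn; exists p.
move: h; rewrite e /area measure0 /= mul0r.
by case: hphi => _ [-> _]; rewrite ltxx.
Qed.

Lemma img_lt1 X k l : digital_image phi d X k l < 1 -> exists v, pixel d k l v /\ ~ X v.
Proof.
rewrite /digital_image => h; apply: contrapT => hn.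
have e : X `&` pixel d k l = pixel d k l.
  apply/seteqP; split => [p [] //|p Pp]; split => //.
  by apply: contrapT => nX; apply: hn; exists p.
move: h; rewrite e area_pixel /= divff ?expf_neq0 ?gt_eqF //.
by case: hphi => _ [_ [-> _]]; rewrite ltxx.
Qed.

Lemma img_mixed X k l c1 e1 c2 e2 : closed X -> 0 < e1 -> 0 < e2 ->
  sq c1 e1 `<=` X `&` pixel d k l -> sq c2 e2 `<=` pixel d k l `\` X ->
  0 < digital_image phi d X k l < 1.
Proof.
move=> cX e10 e20 s1 s2.
have mA x : measurable (xsection (X `&` pixel d k l) x).
  rewrite xsectionI; apply: measurableI; first exact: meas_xsection_closed.
  exact: measurable_xsection (meas_pixel k l).
have mP x : measurable (xsection (pixel d k l) x) := measurable_xsection _ (meas_pixel k l).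
have mS c e x : measurable (xsection (sq c e) x) := measurable_xsection _ (meas_sq c e).
have lo : (area (sq c1 e1) <= area (X `&` pixel d k l))%E.
  by apply: area_mono.
have hi : (area (X `&` pixel d k l) <= area (pixel d k l `\` sq c2 e2))%E.
  apply: area_mono => // [x|].
    by rewrite xsectionD; apply: measurableD.
  move=> p [Xp Pp]; split => // /s2 [] //.
have eD : area (pixel d k l `\` sq c2 e2) = ((d ^+ 2) - 4 * e2 ^+ 2)%:E.
  rewrite /area measureD; [|exact: meas_pixel|exact: meas_sq|]; last first.
    by change (area (pixel d k l) < +oo)%E; rewrite area_pixel ltry.
  have -> : pixel d k l `&` sq c2 e2 = sq c2 e2.
    by apply/seteqP; split => [p [] //|p /[dup] /s2 [] ? _ ?]; split.
  change (area (pixel d k l) - area (sq c2 e2) = (d ^+ 2 - 4 * e2 ^+ 2)%:E)%E.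
  by rewrite area_pixel area_sq.
rewrite area_sq // in lo; rewrite eD in hi.
have fA : area (X `&` pixel d k l) = (fine (area (X `&` pixel d k l)))%:E.
  rewrite fineK //; apply/fin_real/andP; split.
    by rewrite (lt_le_trans _ lo) // ltNyr.
  by rewrite (le_lt_trans hi) // ltry.
move: lo hi; rewrite fA !lee_fin /digital_image.
set a := fine _ => lo hi.
case: hphi => _ [_ [_ H]]; apply: H.
have d2 : 0 < d ^+ 2 by rewrite exprn_gt0.
rewrite divr_gt0 ?ltr_pdivrMr //=.
  have := exprn_gt0 2 e20; lra.
have := exprn_gt0 2 e10; lra.
Qed.
End SM.

Section G.
Variable R : realType.
Implicit Types (p q u v : pt R) (A X : set (pt R)).

Lemma seg_close (c a b w M e : R) : 0 < M -> `|w| < M -> 0 < e ->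
  `|a - b| <= e / M -> `|(c + a * w) - (c + b * w)| < e.
Proof.
move=> M0 wM e0 ab.
have -> : c + a * w - (c + b * w) = (a - b) * w by ring.
rewrite normrM.
have q : e / M * M = e by rewrite divfK // gt_eqF.
have x0 := normr_ge0 (a - b); have y0 := normr_ge0 w.
have : 0 < e / M by rewrite divr_gt0.
nra.
Qed.

Definition seg u v (t : R) : pt R := (u.1 + t * (v.1 - u.1), u.2 + t * (v.2 - u.2)).

Lemma seg_bdry X u v : closed X -> X u -> ~ X v ->
  exists2 t, 0 <= t <= 1 & bdry X (seg u v t).
Proof.
move=> cX Xu nXv.
set M := `|v.1 - u.1| + `|v.2 - u.2| + 1.
have n1 := normr_ge0 (v.1 - u.1); have n2 := normr_ge0 (v.2 - u.2).
have M0 : 0 < M by rewrite /M; lra.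
have M1 : `|v.1 - u.1| < M by rewrite /M; lra.
have M2 : `|v.2 - u.2| < M by rewrite /M; lra.
set T := [set t | 0 <= t <= 1 /\ X (seg u v t)].
have T0 : T 0 by split; [rewrite lexx ler01 | rewrite /seg !mul0r !addr0; case: (u) Xu].
have hT : has_sup T by split; [exists 0 | exists 1 => t [/andP [_ ?] _]].
set s := sup T.
have ub t : T t -> t <= s by move=> Tt; apply: sup_upper_bound.
have s0 : 0 <= s by apply: ub.
have s1 : s <= 1 by apply: ge_sup; [exists 0 | move=> t [/andP [_ ?] _]].
have Xs : X (seg u v s).
  apply: cX => N /nbhs_box [e e0 H].
  have eM : 0 < e / M by rewrite divr_gt0.
  have [t Tt st] := sup_adherent eM hT.
  have ts := ub t Tt; rewrite -/s in st.
  have hst : `|s - t| <= e / M by rewrite ger0_norm ?subr_ge0 //; lra.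
  exists (seg u v t); split; first by case: Tt.
  apply: H; rewrite /seg /=.
  by apply: (@seg_close _ _ _ _ M).
  by apply: (@seg_close _ _ _ _ M).
exists s; first by rewrite s0 s1.
split; first exact: subset_closure.
move=> /nbhs_box [e e0 H].
have s1' : s < 1.
  rewrite lt_neqAle s1 andbT; apply/eqP => es; apply: nXv.
  have ev : seg u v 1 = v by rewrite /seg; case: (v) => a b /=; congr (_, _); ring.
  by rewrite -ev -es.
have eM : 0 < e / M by rewrite divr_gt0.
set h := Num.min (1 - s) (e / M) / 2.
have h0 : 0 < h by rewrite divr_gt0 // lt_min subr_gt0 s1' eM.
have h1 : h <= (1 - s) / 2 by rewrite ler_pM2r // ge_min lexx.
have h2 : h <= e / M / 2 by rewrite ler_pM2r // ge_min lexx orbT.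
have : T (s + h).
  split; first by apply/andP; split; lra.
  apply: H; rewrite /seg /=; apply: (@seg_close _ _ _ _ M) => //; rewrite distrC addrC addKr ger0_norm; lra.
move=> /ub; lra.
Qed.

Definition Qd p q : R := (p.1 - q.1) ^+ 2 + (p.2 - q.2) ^+ 2.

Lemma Qd_ge0 p q : 0 <= Qd p q.
Proof. by rewrite /Qd addr_ge0 // sqr_ge0. Qed.

Lemma edist_le p q (r : R) : 0 <= r -> (Defs.edist p q <= r) = (Qd p q <= r ^+ 2).
Proof.
move=> r0; rewrite /Defs.edist -{1}(ger0_norm r0) -sqrtr_sqr ler_sqrt //.
exact: sqr_ge0.
Qed.

Lemma edist_lt p q (r : R) : 0 < r -> (Defs.edist p q < r) = (Qd p q < r ^+ 2).
Proof.
move=> r0; rewrite /Defs.edist -{1}(gtr0_norm r0) -sqrtr_sqr ltr_sqrt //.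
exact: exprn_gt0.
Qed.

Lemma coord_sq (a h e : R) : `|h| < e -> e <= 1 -> (a + h) ^+ 2 <= a ^+ 2 + e * (2 * `|a| + 1).
Proof.
move=> he e1.
have h1 : a * h <= `|a| * e.
  apply: le_trans (ler_norm _) _; rewrite normrM ler_wpM2l //; exact: ltW.
have h2 : h ^+ 2 <= e.
  move: he; rewrite ltr_norml => /andP [ha hb].
  have e0 : 0 < e by lra.
  have : 0 < (e - h) * (e + h) by rewrite mulr_gt0 //; lra.
  have : e * e <= e * 1 by rewrite ler_pM2l.
  rewrite expr2; nra.
nra.
Qed.

Lemma Qd_open a c (r : R) : Qd a c < r ^+ 2 -> exists2 e : R, 0 < e &
  forall q, `|c.1 - q.1| < e -> `|c.2 - q.2| < e -> Qd a q < r ^+ 2.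
Proof.
move=> h; set del := r ^+ 2 - Qd a c.
set K := 2 * `|c.1 - a.1| + 1 + (2 * `|c.2 - a.2| + 1).
have n1 := normr_ge0 (c.1 - a.1); have n2 := normr_ge0 (c.2 - a.2).
have K0 : 0 < K by rewrite /K; lra.
have del0 : 0 < del by rewrite /del; lra.
exists (Num.min 1 (del / (2 * K))).
  by rewrite lt_min ltr01 divr_gt0 // mulr_gt0.
move=> q hq1 hq2.
set e := Num.min 1 (del / (2 * K)) in hq1 hq2.
have e1 : e <= 1 by rewrite ge_min lexx.
have e2 : e <= del / (2 * K) by rewrite ge_min lexx orbT.
have e0 : 0 < e by apply: le_lt_trans hq1.
have eK : e * K <= del / 2.
  have : e * K <= del / (2 * K) * K by rewrite ler_pM2r.
  have -> : del / (2 * K) * K = del / 2 by field; rewrite gt_eqF.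
  done.
rewrite /Qd.
have -> : a.1 - q.1 = (a.1 - c.1) + (c.1 - q.1) by ring.
have -> : a.2 - q.2 = (a.2 - c.2) + (c.2 - q.2) by ring.
have t1 := coord_sq (a.1 - c.1) hq1 e1.
have t2 := coord_sq (a.2 - c.2) hq2 e1.
rewrite (distrC a.1) (distrC a.2) in t1 t2.
move: h; rewrite /Qd => h.
rewrite /K in eK; rewrite /del /Qd in del0 eK.
lra.
Qed.

Lemma Qd_sym p q : Qd p q = Qd q p.
Proof. by rewrite /Qd; ring. Qed.

Lemma sq_in c e q : sq c e q -> `|c.1 - q.1| <= e /\ `|c.2 - q.2| <= e.
Proof.
rewrite /sq /setX /= !in_itv /= => -[/andP [a1 b1] /andP [a2 b2]].
by rewrite !ler_norml; split; apply/andP; split; lra.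
Qed.

Lemma min_half (e f : R) : 0 < e -> 0 < f ->
  0 < Num.min e f / 2 /\ Num.min e f / 2 < e /\ Num.min e f / 2 < f.
Proof.
move=> e0 f0.
have m1 : Num.min e f <= e by rewrite ge_min lexx.
have m2 : Num.min e f <= f by rewrite ge_min lexx orbT.
have m0 : 0 < Num.min e f by rewrite lt_min e0 f0.
lra.
Qed.

Variables (d : R) (d0 : 0 < d).

Definition openpix k l (c : pt R) :=
  d * k%:~R < c.1 < d * (k + 1)%:~R /\ d * l%:~R < c.2 < d * (l + 1)%:~R.

Lemma openpix_box k l c : openpix k l c -> exists2 e : R, 0 < e &
  forall q, `|c.1 - q.1| < e -> `|c.2 - q.2| < e -> pixel d k l q.
Proof.
case=> /andP [a1 b1] /andP [a2 b2].
exists (Num.min (Num.min (c.1 - d * k%:~R) (d * (k + 1)%:~R - c.1))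
                (Num.min (c.2 - d * l%:~R) (d * (l + 1)%:~R - c.2))).
  by rewrite !lt_min !subr_gt0 a1 b1 a2 b2.
move=> q; rewrite !lt_min !ltr_norml => /andP [/andP [/andP [h1 h2] /andP [h3 h4]] _].
move=> /andP [_ /andP [/andP [h5 h6] /andP [h7 h8]]].
by split; apply/andP; split; lra.
Qed.

Lemma mixed_int (phi : R -> R) (hphi : admissible_phi phi) X k l c1 c2 :
  closed X -> openpix k l c1 -> nbhs c1 X -> openpix k l c2 -> nbhs c2 (~` X) ->
  0 < digital_image phi d X k l < 1.
Proof.
move=> cX o1 n1 o2 n2.
have [e1 e10 P1] := openpix_box o1; have [f1 f10 X1] := nbhs_box n1.
have [e2 e20 P2] := openpix_box o2; have [f2 f20 X2] := nbhs_box n2.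
apply: (img_mixed d0 hphi (c1 := c1) (e1 := Num.min e1 f1 / 2) (c2 := c2) (e2 := Num.min e2 f2 / 2)) => //.
- by case: (min_half e10 f10).
- by case: (min_half e20 f20).
- move=> q /sq_in [h1 h2]; have [_ [m1 m2]] := min_half e10 f10.
  by split; [apply: X1 | apply: P1]; apply: le_lt_trans; eassumption.
- move=> q /sq_in [h1 h2]; have [_ [m1 m2]] := min_half e20 f20.
  by split; [apply: P2 | apply: X2]; apply: le_lt_trans; eassumption.
Qed.

Definition ent1 (a b y w : R) :=
  (a < y < b) \/ (y = a /\ 0 < w) \/ (y = b /\ w < 0).

Lemma ent1P a b y w : a < b -> ent1 a b y w -> exists2 t0 : R, 0 < t0 &
  forall t, 0 < t -> t <= t0 -> a < y + t * w < b.
Proof.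
move=> ab [/andP [h1 h2]|[[-> w0]|[-> w0]]].
- set m := Num.min (y - a) (b - y).
  have m0 : 0 < m by rewrite lt_min !subr_gt0 h1 h2.
  have m1 : m <= y - a by rewrite ge_min lexx.
  have m2 : m <= b - y by rewrite ge_min lexx orbT.
  have n0 := normr_ge0 w.
  exists (m / (`|w| + 1)); first by rewrite divr_gt0 //; lra.
  move=> t t0 tt0.
  have : t * (`|w| + 1) <= m.
    by rewrite -ler_pdivlMr; [|lra].
  have := ler_norm w; have := ler_normr w; have := ler_norm (- w); rewrite normrN.
  move=> ha hb hc hd; apply/andP; split; nra.
- exists ((b - a) / (2 * w)); first by rewrite divr_gt0 //; lra.
  move=> t t0 tt0.
  have : t * (2 * w) <= b - a by rewrite -ler_pdivlMr //; lra.
  move=> h; apply/andP; split; nra.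
- exists ((b - a) / (2 * - w)); first by rewrite divr_gt0 //; lra.
  move=> t t0 tt0.
  have : t * (2 * - w) <= b - a by rewrite -ler_pdivlMr //; lra.
  move=> h; apply/andP; split; nra.
Qed.

Definition enters k l (x w : pt R) := exists2 t0 : R, 0 < t0 &
  forall t, 0 < t -> t <= t0 -> openpix k l (x.1 + t * w.1, x.2 + t * w.2).

Lemma dk_lt (k : int) : d * k%:~R < d * (k + 1)%:~R.
Proof. by rewrite intrD mulrDr mulr1 ltrDl. Qed.

Lemma enters_of k l x w :
  ent1 (d * k%:~R) (d * (k + 1)%:~R) x.1 w.1 ->
  ent1 (d * l%:~R) (d * (l + 1)%:~R) x.2 w.2 -> enters k l x w.
Proof.
move=> /(ent1P (dk_lt k)) [t1 t10 H1] /(ent1P (dk_lt l)) [t2 t20 H2].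
exists (Num.min t1 t2); first by rewrite lt_min t10 t20.
move=> t t0 tt; split; [apply: H1 | apply: H2] => //; apply: (le_trans tt);
  by rewrite ge_min lexx ?orbT.
Qed.

Lemma side_nbhs A g k l w : nbhs g A -> enters k l g w ->
  exists c, openpix k l c /\ nbhs c A.
Proof.
move=> /nbhs_box [e e0 HA] [t0 t00 H].
set W := `|w.1| + `|w.2| + 1.
have n1 := normr_ge0 w.1; have n2 := normr_ge0 w.2.
have W0 : 0 < W by rewrite /W; lra.
set t := Num.min t0 (e / (2 * W)).
have t0' : 0 < t by rewrite lt_min t00 divr_gt0 // mulr_gt0.
have tt0 : t <= t0 by rewrite ge_min lexx.
have te : t * (2 * W) <= e.
  by rewrite -ler_pdivlMr ?mulr_gt0 // ge_min lexx orbT.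
exists (g.1 + t * w.1, g.2 + t * w.2); split; first exact: H.
apply: (@box_nbhs R _ _ (e / 2)) => [|q /= h1 h2]; first by rewrite divr_gt0.
have a1 : `|t * w.1| <= t * W by rewrite normrM gtr0_norm // ler_wpM2l ?ltW //; rewrite /W; lra.
have a2 : `|t * w.2| <= t * W by rewrite normrM gtr0_norm // ler_wpM2l ?ltW //; rewrite /W; lra.
apply: HA.
  have := ler_normD (g.1 - (g.1 + t * w.1)) (g.1 + t * w.1 - q.1).
  have -> : g.1 - (g.1 + t * w.1) + (g.1 + t * w.1 - q.1) = g.1 - q.1 by ring.
  have -> : g.1 - (g.1 + t * w.1) = - (t * w.1) by ring.
  rewrite normrN; lra.
have := ler_normD (g.2 - (g.2 + t * w.2)) (g.2 + t * w.2 - q.2).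
have -> : g.2 - (g.2 + t * w.2) + (g.2 + t * w.2 - q.2) = g.2 - q.2 by ring.
have -> : g.2 - (g.2 + t * w.2) = - (t * w.2) by ring.
rewrite normrN; lra.
Qed.

Lemma side_ball A a x k l w (r : R) : 0 < r -> Qd a x <= r ^+ 2 ->
  0 < w.1 * (a.1 - x.1) + w.2 * (a.2 - x.2) -> oball a r `<=` A ->
  enters k l x w -> exists c, openpix k l c /\ nbhs c A.
Proof.
move=> r0 hQ s0 bA [t0 t00 H].
set s := w.1 * (a.1 - x.1) + w.2 * (a.2 - x.2) in s0.
set W := w.1 ^+ 2 + w.2 ^+ 2 + 1.
have W0 : 0 < W by rewrite /W; have := sqr_ge0 w.1; have := sqr_ge0 w.2; lra.
set t := Num.min t0 (s / W).
have t0' : 0 < t by rewrite lt_min t00 divr_gt0.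
have tt0 : t <= t0 by rewrite ge_min lexx.
have tW : t * W <= s by rewrite -ler_pdivlMr // ge_min lexx orbT.
set c := (x.1 + t * w.1, x.2 + t * w.2).
have Qc : Qd a c < r ^+ 2.
  apply: lt_le_trans hQ.
  set q := w.1 ^+ 2 + w.2 ^+ 2.
  have e1 : Qd a c = Qd a x - 2 * (t * s) + t * (t * q).
    by rewrite /Qd /c /s /q /=; ring.
  have e2 : t * q <= s by apply: le_trans tW; rewrite ler_pM2l // /W /q; lra.
  have e3 : t * (t * q) <= t * s by rewrite ler_pM2l.
  have e4 : 0 < t * s by rewrite mulr_gt0.
  rewrite e1; lra.
exists c; split; first exact: H.
have [e e0 He] := Qd_open Qc.
apply: (box_nbhs e0) => q h1 h2; apply: bA.
by rewrite /oball /= edist_lt // He.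
Qed.

Lemma floor_d (y : R) : d * (Num.floor (y / d))%:~R <= y < d * (Num.floor (y / d) + 1)%:~R.
Proof.
have /andP [h1 h2] := floor_itv (y / d).
by rewrite !(mulrC d) -ler_pdivlMr // -ltr_pdivrMr // h1 h2.
Qed.

Lemma corner_dich X g : closed X -> ~ bdry X g -> nbhs g X \/ nbhs g (~` X).
Proof.
move=> cX nb; case: (pselect (X g)) => Xg.
  left; apply: contrapT => ni; apply: nb; split => //; exact: subset_closure.
by right; apply: open_nbhs_nbhs; split => //; exact: closed_openC.
Qed.

Lemma mid_eq (a1 a2 b1 b2 r : R) : a1 ^+ 2 + a2 ^+ 2 <= r ^+ 2 -> b1 ^+ 2 + b2 ^+ 2 <= r ^+ 2 ->
  ((a1 + b1) / 2) ^+ 2 + ((a2 + b2) / 2) ^+ 2 <= r ^+ 2.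
Proof.
move=> ha hb.
have e : ((a1 + b1) / 2) ^+ 2 + ((a2 + b2) / 2) ^+ 2 =
  (a1 ^+ 2 + a2 ^+ 2 + (b1 ^+ 2 + b2 ^+ 2)) / 2 - ((a1 - b1) ^+ 2 + (a2 - b2) ^+ 2) / 4.
  by field.
rewrite e; have := sqr_ge0 (a1 - b1); have := sqr_ge0 (a2 - b2); lra.
Qed.

Lemma claimA (phi : R -> R) (hphi : admissible_phi phi) (r : R) X x :
  0 < r -> r_regular r X -> (forall k l : int, ~ bdry X (grid_pt d k l)) ->
  bdry X x -> exists k l, 0 < digital_image phi d X k l < 1 /\
    d * k%:~R <= x.1 <= d * (k + 1)%:~R /\ d * l%:~R <= x.2 <= d * (l + 1)%:~R.
Proof.
move=> r0 [cX rr] ng bx.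
have r0' : 0 <= r := ltW r0.
have [xb [xw [bX [wX eq]]]] := rr x bx.
have : (cball xb r `&` cball xw r) x by rewrite eq.
case; rewrite /cball /= !edist_le // => hb hw.
have hm : (cball xb r `&` cball xw r) ((xb.1 + xw.1) / 2, (xb.2 + xw.2) / 2).
  split; rewrite /cball /= edist_le //; rewrite /Qd /=.
    have -> : xb.1 - (xb.1 + xw.1) / 2 = ((xb.1 - x.1) + (x.1 - xw.1)) / 2 by field.
    have -> : xb.2 - (xb.2 + xw.2) / 2 = ((xb.2 - x.2) + (x.2 - xw.2)) / 2 by field.
    apply: mid_eq; first exact: hb.
    by move: hw; rewrite Qd_sym.
  have -> : xw.1 - (xb.1 + xw.1) / 2 = ((xw.1 - x.1) + (x.1 - xb.1)) / 2 by field.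
  have -> : xw.2 - (xb.2 + xw.2) / 2 = ((xw.2 - x.2) + (x.2 - xb.2)) / 2 by field.
  apply: mid_eq; first exact: hw.
  by move: hb; rewrite Qd_sym.
move: hm; rewrite eq => /= em.
have em1 := congr1 fst em; have em2 := congr1 snd em; rewrite /= in em1 em2.
set n1 := xb.1 - x.1; set n2 := xb.2 - x.2.
have hw1 : xw.1 - x.1 = - n1 by rewrite /n1 -em1; field.
have hw2 : xw.2 - x.2 = - n2 by rewrite /n2 -em2; field.
have XS k l w : enters k l x w -> 0 < w.1 * n1 + w.2 * n2 ->
    exists c, openpix k l c /\ nbhs c X.
  by move=> en s0; apply: (side_ball r0 hb s0 bX en).
have CS k l w : enters k l x w -> 0 < - (w.1 * n1 + w.2 * n2) ->
    exists c, openpix k l c /\ nbhs c (~` X).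
  move=> en s0; apply: (side_ball r0 (a := xw) _ _ wX en).
    by move: hw; rewrite Qd_sym.
  by rewrite hw1 hw2; lra.
have MIX k l : (exists c, openpix k l c /\ nbhs c X) ->
    (exists c, openpix k l c /\ nbhs c (~` X)) -> 0 < digital_image phi d X k l < 1.
  by move=> [c1 [p1 m1]] [c2 [p2 m2]]; apply: (mixed_int hphi cX p1 m1 p2 m2).
have nn : n1 != 0 \/ n2 != 0.
  case: (eqVneq n1 0) => [e1|]; last by left.
  case: (eqVneq n2 0) => [e2|]; last by right.
  have ex : xb = x by move: e1 e2; rewrite /n1 /n2 => /eqP; rewrite subr_eq0 => /eqP e1 /eqP;
    rewrite subr_eq0 => /eqP e2; case: (xb) (x) e1 e2 => ? ? [? ?] /= -> ->.
  have ew : xw = x by move: hw1 hw2; rewrite e1 e2 oppr0 => /eqP; rewrite subr_eq0 => /eqP e1' /eqP;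
    rewrite subr_eq0 => /eqP e2'; case: (xw) (x) e1' e2' => ? ? [? ?] /= -> ->.
  have bxx : oball x r x by rewrite /oball /= edist_lt // /Qd !subrr expr0n /= addr0 exprn_gt0.
  by exfalso; apply: (wX x); [rewrite ew | apply: bX; rewrite ex].
have hpos : 0 < n1 * n1 + n2 * n2.
  rewrite -!expr2; have s1 := sqr_ge0 n1; have s2 := sqr_ge0 n2.
  case: nn => h.
    have h3 : 0 < n1 ^+ 2 by rewrite exprn_even_gt0.
    lra.
  have h3 : 0 < n2 ^+ 2 by rewrite exprn_even_gt0.
  lra.
have [kx1 kx2] := andP (floor_d x.1); have [lx1 lx2] := andP (floor_d x.2).
set k := Num.floor (x.1 / d) in kx1 kx2; set l := Num.floor (x.2 / d) in lx1 lx2.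
have dk1 : d * (k - 1)%:~R <= d * k%:~R by rewrite ler_pM2l // ler_int gerBl.
have dk1' : d * (k - 1 + 1)%:~R = d * k%:~R by rewrite subrK.
have dl1 : d * (l - 1)%:~R <= d * l%:~R by rewrite ler_pM2l // ler_int gerBl.
have dl1' : d * (l - 1 + 1)%:~R = d * l%:~R by rewrite subrK.
case: (eqVneq x.1 (d * k%:~R)) => ex1; case: (eqVneq x.2 (d * l%:~R)) => ex2.
- by exfalso; apply: (ng k l); move: bx; rewrite /grid_pt -ex1 -ex2; case: (x).
- have lx1' : d * l%:~R < x.2 by rewrite lt_neqAle eq_sym ex2 lx1.
  have o2 : ent1 (d * l%:~R) (d * (l + 1)%:~R) x.2 0 by left; rewrite lx1' lx2.
  case: (eqVneq n2 0) => en2.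
    have en1 : n1 != 0 by case: nn => //; rewrite en2 eqxx.
    have g := corner_dich cX (ng k l); rewrite /grid_pt in g.
    have bd' : d * (k - 1)%:~R <= x.1 <= d * (k - 1 + 1)%:~R by rewrite dk1' ex1 lexx dk1.
    have bd : d * k%:~R <= x.1 <= d * (k + 1)%:~R by rewrite kx1 ltW.
    have bl : d * l%:~R <= x.2 <= d * (l + 1)%:~R by rewrite lx1 ltW.
    have eR : enters k l x (1, 0) by apply: enters_of => //=; right; left; split.
    have eL : enters (k - 1) l x (-1, 0).
      by apply: enters_of => //=; right; right; rewrite dk1' ex1; split => //; rewrite ltrN10.
    have gR : enters k l (d * k%:~R, d * l%:~R) (1, 1)
      by apply: enters_of => //=; right; left; split.
    have gL : enters (k - 1) l (d * k%:~R, d * l%:~R) (-1, 1).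
      by apply: enters_of => /=; [right; right; rewrite dk1'; split => //; rewrite ltrN10 | right; left; split].
    case: (ltgtP n1 0) => sn1; last by move: en1; rewrite sn1 eqxx.
    + case: g => g.
        exists k, l; split => //; apply: MIX.
          exact: (side_nbhs g gR).
        by apply: (CS k l (1, 0)) => //=; rewrite en2; lra.
      exists (k - 1), l; split => //; apply: MIX.
        by apply: (XS (k - 1) l (-1, 0)) => //=; rewrite en2; lra.
      exact: (side_nbhs g gL).
    + case: g => g.
        exists (k - 1), l; split => //; apply: MIX.
          exact: (side_nbhs g gL).
        by apply: (CS (k - 1) l (-1, 0)) => //=; rewrite en2; lra.
      exists k, l; split => //; apply: MIX.
        by apply: (XS k l (1, 0)) => //=; rewrite en2; lra.
      exact: (side_nbhs g gR).
  set del := n2 * n2 / (`|n1| + 1).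
  have hn1 := normr_ge0 n1.
  have n22 : 0 < n2 * n2 by rewrite -expr2 exprn_even_gt0.
  have del0 : 0 < del by rewrite divr_gt0 //; lra.
  have hdel : del * `|n1| + del = n2 * n2.
    by rewrite /del; field; apply: lt0r_neq0; lra.
  have h1 : del * n1 <= del * `|n1| by apply: ler_wpM2l; [exact: ltW | exact: ler_norm].
  have h2 : - (del * `|n1|) <= del * n1.
    by rewrite -mulrN; apply: ler_wpM2l; [exact: ltW | rewrite lerNl -normrN; exact: ler_norm].
  exists k, l; split; last by rewrite kx1 lx1 !ltW.
  apply: MIX; [apply: (XS k l (del, n2)) | apply: (CS k l (del, - n2))] => /=.
  + apply: enters_of => /=; [by right; left; split|].
    by left; rewrite lx1' lx2.
  + lra.
  + apply: enters_of => /=; [by right; left; split|].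
    by left; rewrite lx1' lx2.
  + lra.
- have kx1' : d * k%:~R < x.1 by rewrite lt_neqAle eq_sym ex1 kx1.
  case: (eqVneq n1 0) => en1.
    have en2 : n2 != 0 by case: nn => //; rewrite en1 eqxx.
    have g := corner_dich cX (ng k l); rewrite /grid_pt in g.
    have bd' : d * (l - 1)%:~R <= x.2 <= d * (l - 1 + 1)%:~R by rewrite dl1' ex2 lexx dl1.
    have bd : d * l%:~R <= x.2 <= d * (l + 1)%:~R by rewrite lx1 ltW.
    have bk : d * k%:~R <= x.1 <= d * (k + 1)%:~R by rewrite kx1 ltW.
    have o1 : ent1 (d * k%:~R) (d * (k + 1)%:~R) x.1 0 by left; rewrite kx1' kx2.
    have eR : enters k l x (0, 1) by apply: enters_of => //=; right; left; split.
    have eL : enters k (l - 1) x (0, -1).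
      by apply: enters_of => //=; right; right; rewrite dl1' ex2; split => //; rewrite ltrN10.
    have gR : enters k l (d * k%:~R, d * l%:~R) (1, 1)
      by apply: enters_of => //=; right; left; split.
    have gL : enters k (l - 1) (d * k%:~R, d * l%:~R) (1, -1).
      by apply: enters_of => /=; [right; left; split | right; right; rewrite dl1'; split => //; rewrite ltrN10].
    case: (ltgtP n2 0) => sn2; last by move: en2; rewrite sn2 eqxx.
    + case: g => g.
        exists k, l; split => //; apply: MIX.
          exact: (side_nbhs g gR).
        by apply: (CS k l (0, 1)) => //=; rewrite en1; lra.
      exists k, (l - 1); split => //; apply: MIX.
        by apply: (XS k (l - 1) (0, -1)) => //=; rewrite en1; lra.
      exact: (side_nbhs g gL).
    + case: g => g.
        exists k, (l - 1); split => //; apply: MIX.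
          exact: (side_nbhs g gL).
        by apply: (CS k (l - 1) (0, -1)) => //=; rewrite en1; lra.
      exists k, l; split => //; apply: MIX.
        by apply: (XS k l (0, 1)) => //=; rewrite en1; lra.
      exact: (side_nbhs g gR).
  set del := n1 * n1 / (`|n2| + 1).
  have hn2 := normr_ge0 n2.
  have n11 : 0 < n1 * n1 by rewrite -expr2 exprn_even_gt0.
  have del0 : 0 < del by rewrite divr_gt0 //; lra.
  have hdel : del * `|n2| + del = n1 * n1.
    by rewrite /del; field; apply: lt0r_neq0; lra.
  have h1 : del * n2 <= del * `|n2| by apply: ler_wpM2l; [exact: ltW | exact: ler_norm].
  have h2 : - (del * `|n2|) <= del * n2.
    by rewrite -mulrN; apply: ler_wpM2l; [exact: ltW | rewrite lerNl -normrN; exact: ler_norm].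
  exists k, l; split; last by rewrite kx1 lx1 !ltW.
  apply: MIX; [apply: (XS k l (n1, del)) | apply: (CS k l (- n1, del))] => /=.
  + apply: enters_of => /=; [|by right; left; split].
    by left; rewrite kx1' kx2.
  + lra.
  + apply: enters_of => /=; [|by right; left; split].
    by left; rewrite kx1' kx2.
  + lra.
- have kx1' : d * k%:~R < x.1 by rewrite lt_neqAle eq_sym ex1 kx1.
  have lx1' : d * l%:~R < x.2 by rewrite lt_neqAle eq_sym ex2 lx1.
  exists k, l; split; last by rewrite kx1 lx1 !ltW.
  have en : enters k l x (n1, n2) by apply: enters_of; left; apply/andP; split.
  have en' : enters k l x (- n1, - n2) by apply: enters_of; left; apply/andP; split.
  apply: MIX; [apply: (XS k l (n1, n2)) | apply: (CS k l (- n1, - n2))] => //; rewrite /=; lra.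
Qed.
End G.


Section F.
Variable R : realType.

Lemma convex1 (a b u v t : R) : a <= u <= b -> a <= v <= b -> 0 <= t <= 1 ->
  a <= u + t * (v - u) <= b.
Proof.
move=> /andP [h1 h2] /andP [h3 h4] /andP [h5 h6].
have e : u + t * (v - u) = (1 - t) * u + t * v by ring.
rewrite e; apply/andP; split; nra.
Qed.

Lemma pix_center (d : R) (k : int) z : d * k%:~R <= z <= d * (k + 1)%:~R ->
  `|d * k%:~R + d / 2 - z| <= d / 2.
Proof.
rewrite intrD mulrDr mulr1 => /andP [h1 h2].
by rewrite ler_norml; apply/andP; split; lra.
Qed.

Lemma sq_le (a M : R) : `|a| <= M -> a ^+ 2 <= M ^+ 2.
Proof.
rewrite ler_norml => /andP [h1 h2]; rewrite !expr2; nra.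
Qed.

Lemma bound78 (d : R) p q : 0 < d -> `|p.1 - q.1| <= d * 6 / 10 -> `|p.2 - q.2| <= d * 6 / 10 ->
  Defs.edist p q <= d * 7 / 8.
Proof.
move=> d0 h1 h2; rewrite edist_le; last lra.
have := sq_le h1; have := sq_le h2; rewrite /Qd.
have -> : (d * 6 / 10) ^+ 2 = d ^+ 2 * 36 / 100 by field.
have -> : (d * 7 / 8) ^+ 2 = d ^+ 2 * 49 / 64 by field.
have := exprn_gt0 2 d0; lra.
Qed.
End F.

Unset Implicit Arguments. Set Strict Implicit.

Theorem theorem2p6 (R : realType) (d : R) (phi : R -> R) :
  0 < d -> admissible_phi phi ->
  exists Gamma : dimage R -> set (pt R),
    forall (r : R) (X : set (pt R)),
      0 < r -> d * Num.sqrt 2 < r ->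
      bounded_plane X -> r_regular r X ->
      (forall k l : int, ~ bdry X (grid_pt d k l)) ->
      (hausdorff (bdry (Gamma (digital_image phi d X))) (bdry X) < d%:E)%E.
Proof.
move=> d0 hphi.
pose center (k l : int) : pt R := (d * k%:~R + d / 2, d * l%:~R + d / 2).
exists (fun I => [set p | exists k l, 0 < I k l < 1 /\ p = center k l]).
move=> r X r0 _ _ rr ng.
have cX : closed X by case: rr.
set I := digital_image phi d X.
set G := [set p | exists k l, 0 < I k l < 1 /\ p = center k l].
apply: (@le_lt_trans _ _ (d * 7 / 8)%:E); last by rewrite lte_fin; lra.
rewrite /hausdorff ge_max; apply/andP; split; apply: ge_ereal_sup => _ [y hy <-].
-
  have d10 : 0 < d / 10 by rewrite divr_gt0.
  have [q [Gq [c1 c2]]] := closure_box hy.1 d10.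
  case: Gq => k [l [/andP [i0 i1] eq]].
  have [u [Xu Pu]] := img_pos hphi i0.
  have [v [Pv nXv]] := img_lt1 d0 hphi i1.
  have [t t01 bz] := seg_bdry cX Xu nXv.
  apply: ge_ereal_inf; exists (Defs.edist y (seg u v t))%:E; first by exists (seg u v t).
  rewrite lee_fin; apply: bound78 => //.
  + case: Pu => Pu1 _; case: Pv => Pv1 _.
    have := pix_center (convex1 Pu1 Pv1 t01); rewrite -/(seg u v t).1 => hz.
    have := ler_normD (y.1 - q.1) (q.1 - (seg u v t).1).
    have -> : y.1 - q.1 + (q.1 - (seg u v t).1) = y.1 - (seg u v t).1 by ring.
    rewrite eq /= in c1 *; lra.
  + case: Pu => _ Pu1; case: Pv => _ Pv1.
    have := pix_center (convex1 Pu1 Pv1 t01); rewrite -/(seg u v t).2 => hz.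
    have := ler_normD (y.2 - q.2) (q.2 - (seg u v t).2).
    have -> : y.2 - q.2 + (q.2 - (seg u v t).2) = y.2 - (seg u v t).2 by ring.
    rewrite eq /= in c2 *; lra.
- have [k [l [mix [b1 b2]]]] := claimA d0 hphi r0 rr ng hy.
  have bG : bdry G (center k l).
    split; first by apply: subset_closure; exists k, l.
    move=> /nbhs_box [e e0 H].
    have [s0 [se sd]] := min_half e0 d0.
    set s := Num.min e d / 2 in s0 se sd.
    have : G ((center k l).1 + s, (center k l).2).
      apply: H => /=.
        by rewrite opprD addNKr normrN gtr0_norm.
      by rewrite subrr normr0.
    case=> k' [l' [_ eq]].
    have := congr1 fst eq; rewrite /center /= => e1.
    have ek : s = d * (k' - k)%:~R by rewrite intrB; lra.
    have h0 : 0 < (k' - k)%:~R :> R.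
      by rewrite -(pmulr_rgt0 _ d0) -ek.
    have h1 : (k' - k)%:~R < 1 :> R.
      by rewrite -(ltr_pM2l d0) mulr1 -ek.
    rewrite ltr0z in h0; rewrite ltrz1 in h1; lia.
  apply: ge_ereal_inf; exists (Defs.edist (center k l) y)%:E; first by exists (center k l).
  rewrite lee_fin; apply: bound78 => //=.
    by apply: le_trans (pix_center b1) _; lra.
  by apply: le_trans (pix_center b2) _; lra.
Qed.
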